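(* Let $\mathrm{SDiv}^+_d(\mathbb G)$ be the closed subscheme of $\mathrm{Div}^+_d(\mathbb G)$ consisting of divisors $D$ with $\lambda^dD=[0]$. Then $\mathcal O_{\mathrm{SDiv}^+_d(\mathbb G)}=\mathcal O_X[[c_2,\dots,c_d]]$, i.e. the restrictions of $c_2,\dots,c_d$ induce an isomorphism $\mathcal O_X[[c_2,\dots,c_d]]\cong\mathcal O_{\mathrm{SDiv}^+_d(\mathbb G)}$.
   Context: $\mathbb G$ is an ordinary formal group over $X=\mathrm{spf}(\mathcal O_X)$ with coordinate $x$, so $\mathcal O_{\mathbb G}=\mathcal O_X[[x]]$, and $x(a+b)=F(x(a),x(b))$ for a formal group law $F$. $\mathrm{Div}^+_d(\mathbb G)=\mathbb G^d/\Sigma_d=\mathrm{spf}(\mathcal O_X[[c_1,\dots,c_d]])$, where $c_k$ is the $k$-th elementary symmetric function in $x_1,\dots,x_d$; the point $\sum_i[a_i]$ has $c_k=\sigma_k(x(a_1),\dots,x(a_d))$. The map $\lambda^d\colon\mathrm{Div}^+_d(\mathbb G)\to\mathrm{Div}^+_1(\mathbb G)=\mathbb G$ sends $\sum_{i=1}^d[a_i]$ to $[a_1+\dots+a_d]$. *)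

(* Defs.v *)
From mathcomp Require Import all_boot all_algebra.
Unset Printing Implicit Defensive.
Import GRing.Theory.
Local Open Scope ring_scope.

Definition mono (n : nat) := {ffun 'I_n -> nat}.
Definition tdeg {n} (m : mono n) : nat := (\sum_(i < n) m i)%N.

Definition ps (R : Type) (n : nat) := mono n -> R.

Definition ps0 {R : comNzRingType} n : ps R n := fun _ => 0.
Definition ps1 {R : comNzRingType} n : ps R n :=
  fun m => if m == [ffun=> 0%N] then 1 else 0.
Definition psadd {R : comNzRingType} {n} (f g : ps R n) : ps R n := fun m => f m + g m.

Definition pssub {R : comNzRingType} {n} (f g : ps R n) : ps R n := fun m => f m - g m.

Definition bmono {n N} (a : {ffun 'I_n -> 'I_N.+1}) : mono n := [ffun i => nat_of_ord (a i)].

Definition psmul {R : comNzRingType} {n} (f g : ps R n) : ps R n := fun m =>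
  \sum_(a : {ffun 'I_n -> 'I_(tdeg m).+1} | [forall i, (a i <= m i)%N])
     f (bmono a) * g [ffun i => (m i - a i)%N].

Definition psexp {R : comNzRingType} {n} (f : ps R n) (k : nat) : ps R n :=
  iter k (psmul f) (ps1 n).

(* the i-th coordinate variable (0-based); zero series if i >= n *)
Definition psvar {R : comNzRingType} n (i : nat) : ps R n := fun m =>
  if (i < n)%N && [forall j : 'I_n, m j == nat_of_bool ((j : nat) == i)] then 1 else 0.

(* substitution f(g_0, ..., g_{n-1}); meaningful when the g_i have zero
   constant term (then all terms beyond total degree tdeg m vanish) *)
Definition pscomp {R : comNzRingType} {n k} (f : ps R n) (g : 'I_n -> ps R k) : ps R k :=
  fun m => \sum_(a : {ffun 'I_n -> 'I_(tdeg m).+1})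
     f (bmono a) * (\big[@psmul R k/ps1 k]_(i < n) psexp (g i) (a i)) m.

Definition pair2 {R : comNzRingType} {k} (a b : ps R k) : 'I_2 -> ps R k :=
  fun i => if i == ord0 then a else b.

Definition is_fgl {R : comNzRingType} (F : ps R 2) : Prop :=
  [/\ pscomp F (pair2 (psvar 1 0) (ps0 1)) = psvar 1 0,
      pscomp F (pair2 (ps0 1) (psvar 1 0)) = psvar 1 0,
      pscomp F (pair2 (psvar 2 1) (psvar 2 0)) = F &
      pscomp F (pair2 (pscomp F (pair2 (psvar 3 0) (psvar 3 1))) (psvar 3 2))
      = pscomp F (pair2 (psvar 3 0) (pscomp F (pair2 (psvar 3 1) (psvar 3 2))))].

(* fsum F d k = x(a_1 + ... + a_k) = F(...F(F(x_1,x_2),x_3)...,x_k) in R[[x_1..x_d]] *)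
Fixpoint fsum {R : comNzRingType} (F : ps R 2) d (k : nat) : ps R d :=
  match k with
  | 0 => ps0 d
  | k'.+1 => pscomp F (pair2 (fsum F d k') (psvar d k'))
  end.

Definition elemsym {R : comNzRingType} d (k : nat) : ps R d := fun m =>
  if [forall i, (m i <= 1)%N] && (tdeg m == k) then 1 else 0.

Definition in_ideal {R : comNzRingType} {n} (s h : ps R n) : Prop :=
  exists g, h = psmul g s.

(* inclusion R[[c_2..c_{d+1}]] -> R[[c_1..c_{d+1}]] : c_{j} |-> c_{j} *)
Definition incl_tail {R : comNzRingType} {d} (f : ps R d) : ps R d.+1 :=
  pscomp f (fun i : 'I_d => psvar d.+1 (lift ord0 i)).

(* Main.v *)
Require Import Defs.
From HB Require Import structures.
From mathcomp Require Import all_boot all_algebra.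
From Stdlib Require Import FunctionalExtensionality.
From mathcomp Require Import ring zify.
Set Warnings "-notation-overridden,-ambiguous-paths".

Section Aux.
Import GRing.Theory.
Local Open Scope ring_scope.
Variable R : comNzRingType.

Definition mle {n} (b m : mono n) := [forall i, (b i <= m i)%N].
Definition toa {n} (m : mono n) (b : mono n) : {ffun 'I_n -> 'I_(tdeg m).+1} :=
  [ffun i => inord (b i)].
Definition umon {n} (j : 'I_n) : mono n := [ffun i => nat_of_bool (i == j)].
Definition mzero n : mono n := [ffun => 0%N].
Definition msub {n} (m b : mono n) : mono n := [ffun i => (m i - b i)%N].
Definition madd {n} (m b : mono n) : mono n := [ffun i => (m i + b i)%N].

Lemma le_tdeg n (m : mono n) i : (m i <= tdeg m)%N.
Proof. by rewrite /tdeg (bigD1 i) //= leq_addr. Qed.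

Lemma bmono_toa n (m b : mono n) : mle b m -> bmono (toa m b) = b.
Proof.
move=> /forallP H; apply/ffunP=> i; rewrite !ffunE inordK //.
by rewrite ltnS (leq_trans (H i)) // le_tdeg.
Qed.

Lemma bmono_inj n N : injective (@bmono n N).
Proof.
move=> a a' E; apply/ffunP=> i; apply/val_inj.
by have := congr1 (fun f : mono n => f i) E; rewrite !ffunE.
Qed.

Lemma sum_single (I : finType) (P : pred I) (G : I -> R) a0 :
  P a0 -> (forall a, P a -> a != a0 -> G a = 0) -> \sum_(a | P a) G a = G a0.
Proof.
move=> Pa0 H; rewrite (bigD1 a0) //= big1 ?addr0 // => a /andP[Pa na].
exact: H.
Qed.

Lemma tdeg_umon n (j : 'I_n) : tdeg (umon j) = 1%N.
Proof.
rewrite /tdeg (bigD1 j) //= big1 ?ffunE ?eqxx // => i /negbTE ne.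
by rewrite ffunE ne.
Qed.

Lemma tdeg0 n : tdeg (mzero n) = 0%N.
Proof. by rewrite /tdeg big1 // => i _; rewrite ffunE. Qed.

End Aux.


Section B.
Import GRing.Theory.
Local Open Scope ring_scope.
Variable R : comNzRingType.

Lemma psmulE n (f g : ps R n) m : psmul f g m =
  \sum_(a : {ffun 'I_n -> 'I_(tdeg m).+1} | mle (bmono a) m) f (bmono a) * g (msub m (bmono a)).
Proof.
rewrite /psmul; apply: eq_big => [a|a _].
  by apply: eq_forallb => i; rewrite ffunE.
congr (_ * g _); apply/ffunP => i; by rewrite !ffunE.
Qed.

Lemma sum_mono_single n (m : mono n) (P : pred (mono n)) (G : mono n -> R) b0 :
  P b0 -> mle b0 m ->
  (forall a : {ffun 'I_n -> 'I_(tdeg m).+1}, P (bmono a) -> bmono a != b0 -> G (bmono a) = 0) ->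
  \sum_(a : {ffun 'I_n -> 'I_(tdeg m).+1} | P (bmono a)) G (bmono a) = G b0.
Proof.
move=> Pb0 lb0 H; rewrite (@sum_single _ _ _ _ (toa m b0)) ?bmono_toa //.
move=> a Pa na; apply: H => //; apply: contra na => /eqP E.
by apply/eqP/bmono_inj; rewrite E bmono_toa.
Qed.

Lemma mle0 n (b : mono n) : mle b (mzero n) -> b = mzero n.
Proof.
move=> /forallP H; apply/ffunP => i; have := H i; rewrite !ffunE leqn0.
by move/eqP.
Qed.

Lemma msub0 n (m : mono n) : msub m (mzero n) = m.
Proof. by apply/ffunP => i; rewrite !ffunE subn0. Qed.

Lemma mle_refl n (m : mono n) : mle m m.
Proof. by apply/forallP => i. Qed.

Lemma mle0m n (m : mono n) : mle (mzero n) m.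
Proof. by apply/forallP => i; rewrite ffunE. Qed.

Lemma msubmm n (m : mono n) : msub m m = mzero n.
Proof. by apply/ffunP => i; rewrite !ffunE subnn. Qed.

Lemma mul0E n (f g : ps R n) : psmul f g (mzero n) = f (mzero n) * g (mzero n).
Proof.
rewrite psmulE (@sum_mono_single n (mzero n) (fun b => mle b (mzero n))
  (fun b => f b * g (msub (mzero n) b)) (mzero n)) ?msub0 ?mle_refl //.
by move=> a /mle0 ->; rewrite eqxx.
Qed.

Lemma umon_ne0 {n} (j : 'I_n) : umon j != mzero n.
Proof. apply/eqP => /ffunP /(_ j); by rewrite !ffunE eqxx. Qed.

Lemma mle_umon n (j : 'I_n) b : mle b (umon j) -> b = mzero n \/ b = umon j.
Proof.
move=> /forallP H; case: (boolP (b j == 0%N)) => [/eqP bj|bj].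
  left; apply/ffunP => i; have := H i; rewrite !ffunE.
  by case: eqP => [->|_]; rewrite ?bj // leqn0 => /eqP.
right; apply/ffunP => i; have := H i; rewrite !ffunE.
case: eqP => [->|_]; last by rewrite leqn0 => /eqP.
by move: bj; case: (b j) => [|[|]].
Qed.

Arguments bmono_toa {n m b}.
Arguments mle0m {n}.
Arguments mle_refl {n}.
Lemma toa_inj {n} {m b b' : mono n} : mle b m -> mle b' m -> toa m b = toa m b' -> b = b'.
Proof. by move=> h h' E; rewrite -(bmono_toa h) E bmono_toa. Qed.

Lemma bmono_toa_inv {n} {m : mono n} (a : {ffun 'I_n -> 'I_(tdeg m).+1}) : toa m (bmono a) = a.
Proof. by apply/ffunP => i; apply/val_inj; rewrite !ffunE /= inord_val. Qed.

Lemma mul1E n (f g : ps R n) j : psmul f g (umon j) =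
  f (umon j) * g (mzero n) + f (mzero n) * g (umon j).
Proof.
rewrite psmulE (bigD1 (toa (umon j) (umon j))) ?bmono_toa ?mle_refl //=.
rewrite (bigD1 (toa (umon j) (mzero n))) ?bmono_toa ?mle0m //=; last first.
  apply/eqP => /(toa_inj (mle0m (umon j)) (mle_refl (umon j))) E.
  by move: (umon_ne0 j); rewrite -E eqxx.
rewrite big1 ?addr0 ?msubmm ?msub0 //.
move=> a /andP[/andP[/mle_umon [] E n1] n2]; move: n1 n2.
  by rewrite -(bmono_toa_inv a) E eqxx.
by rewrite -(bmono_toa_inv a) E eqxx.
Qed.

Lemma ps1_0 n : ps1 n (mzero n) = 1 :> R.
Proof. by rewrite /ps1 eqxx. Qed.

Lemma ps1_u n (j : 'I_n) : ps1 n (umon j) = 0 :> R.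
Proof. by rewrite /ps1 (negbTE (umon_ne0 j)). Qed.

End B.

Import GRing.Theory.
Local Open Scope ring_scope.

Definition dmul {R : comNzRingType} (x y : R * R) : R * R :=
  (x.1 * y.1, x.1 * y.2 + x.2 * y.1).

Lemma dmulA (R : comNzRingType) : associative (@dmul R).
Proof. move=> [a b] [c d] [e f]; rewrite /dmul /=; congr (_, _); ring. Qed.
Lemma dmulC (R : comNzRingType) : commutative (@dmul R).
Proof. move=> [a b] [c d]; rewrite /dmul /=; congr (_, _); ring. Qed.
Lemma dmul1m (R : comNzRingType) : left_id (1, 0) (@dmul R).
Proof. move=> [a b]; rewrite /dmul /=; congr (_, _); ring. Qed.

HB.instance Definition _ (R : comNzRingType) :=
  Monoid.isComLaw.Build (R * R)%type (1, 0) (@dmul R) (@dmulA R) (@dmulC R) (@dmul1m R).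

Section C.
Variable R : comNzRingType.

Lemma dual_big n (e : mono n) (c : 'I_n -> R) :
  (\big[@dmul R/(1, 0)]_(i < n) ((if e i == 0%N then 1 else 0),
                                  (if e i == 1%N then c i else 0))).2
  = \sum_(i < n) (if e == umon i then c i else 0).
Proof.
case: (boolP [exists i, e == umon i]) => [/existsP[i0 /eqP E]|NE].
  rewrite (bigD1 i0) //= big1 /=; last first.
    by move=> i ne; rewrite E ffunE (negbTE ne).
  rewrite (bigD1 i0) //= big1 /=; last first.
    move=> i ne; rewrite E; case: eqP => // /ffunP /(_ i0).
    by rewrite !ffunE eqxx eq_sym (negbTE ne).
  rewrite E ffunE eqxx /= eqxx; ring.
rewrite [RHS]big1 /=; last first.
  move=> i _; case: eqP => // E; case/existsP: NE; by exists i; rewrite E.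
case: (boolP [exists i, e i != 0%N]) => [/existsP[i0 nz]|Z]; last first.
  rewrite big1 //= => i _.
  by move: Z; rewrite negb_exists => /forallP /(_ i); rewrite negbK => /eqP ->.
rewrite (bigD1 i0) //= (negbTE nz).
case: (boolP (e i0 == 1%N)) => [/eqP e1|n1]; last by rewrite /dmul /=; ring.
case: (boolP [exists k, (k != i0) && (e k != 0%N)]) => [/existsP[k /andP[nk nzk]]|Z].
  rewrite (bigD1 k) //= (negbTE nzk) /dmul /=; ring.
case/existsP: NE; exists i0; apply/eqP/ffunP => i; rewrite ffunE.
case: eqP => [->|/eqP ne]; first by rewrite e1.
move: Z; rewrite negb_exists => /forallP /(_ i); rewrite ne /= negbK => /eqP //.
Qed.


Definition toaN {n} N (b : mono n) : {ffun 'I_n -> 'I_N.+1} := [ffun i => inord (b i)].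

Lemma bmono_toaN n N (b : mono n) : (forall i, b i <= N)%N -> bmono (toaN N b) = b.
Proof. by move=> H; apply/ffunP=> i; rewrite !ffunE inordK // ltnS H. Qed.

Lemma sum_single_N n N (P : pred (mono n)) (G : mono n -> R) b0 :
  P b0 -> (forall i, b0 i <= N)%N ->
  (forall a : {ffun 'I_n -> 'I_N.+1}, P (bmono a) -> bmono a != b0 -> G (bmono a) = 0) ->
  \sum_(a : {ffun 'I_n -> 'I_N.+1} | P (bmono a)) G (bmono a) = G b0.
Proof.
move=> Pb0 lb0 H; rewrite (@sum_single _ _ _ _ (toaN N b0)) ?bmono_toaN //.
move=> a Pa na; apply: H => //; apply: contra na => /eqP E.
by apply/eqP/bmono_inj; rewrite E bmono_toaN.
Qed.

Lemma comp0E n k (f : ps R n) (g : 'I_n -> ps R k) : pscomp f g (mzero k) = f (mzero n).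
Proof.
rewrite /pscomp (@sum_single _ _ _ _ (toaN _ (mzero n))) //; last first.
  move=> a _; case/eqP; apply/ffunP => i; apply/val_inj; rewrite !ffunE /= inordK //.
  have: (a i < 1)%N by apply: leq_trans (ltn_ord (a i)) _; rewrite tdeg0.
  by rewrite ltnS leqn0 => /eqP.
rewrite bmono_toaN; last by move=> i; rewrite ffunE.
have /= -> := big_morph (fun Q : ps R k => Q (mzero k)) (@mul0E R k) (ps1_0 R k).
rewrite big1 ?mulr1 // => i _; rewrite !ffunE inordK //; exact: ps1_0.
Qed.

Definition phi {k} (j : 'I_k) (P : ps R k) : R * R := (P (mzero k), P (umon j)).

Lemma phi_mul {k} (j : 'I_k) P Q : phi j (psmul P Q) = dmul (phi j P) (phi j Q).
Proof. rewrite /phi mul0E mul1E /dmul /=; congr (_, _); ring. Qed.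

Lemma phi_exp {k} (j : 'I_k) P e : P (mzero k) = 0 ->
  phi j (psexp P e) = ((if e == 0%N then 1 else 0), (if e == 1%N then P (umon j) else 0)).
Proof.
move=> P0; elim: e => [|e IH]; first by rewrite /phi /psexp /= ps1_0 ps1_u.
rewrite /psexp iterS -/(psexp P e) phi_mul IH /phi P0 /dmul /=.
case: e {IH} => [|e] /=; congr (_, _); ring.
Qed.

Lemma comp1E n k (f : ps R n) (g : 'I_n -> ps R k) (j : 'I_k) :
  (forall i, g i (mzero k) = 0) ->
  pscomp f g (umon j) = \sum_(i < n) f (umon i) * g i (umon j).
Proof.
move=> g0; rewrite /pscomp.
have E : forall a : {ffun 'I_n -> 'I_(tdeg (umon j)).+1},
   (\big[@psmul R k/ps1 k]_(i < n) psexp (g i) (a i)) (umon j) =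
   \sum_(i < n) (if bmono a == umon i then g i (umon j) else 0).
  move=> a; have -> : forall P, P (umon j) = (phi j P).2 by [].
  rewrite (big_morph (phi j) (@phi_mul k j) (_ : phi j (ps1 k) = (1, 0))); last first.
    by rewrite /phi ps1_0 ps1_u.
  rewrite -dual_big; congr (_.2); apply: eq_bigr => i _.
  by rewrite phi_exp // !ffunE.
under eq_bigr => a _ do rewrite E mulr_sumr.
rewrite exchange_big /=; apply: eq_bigr => i _.
rewrite (@sum_single_N n _ xpredT (fun b => f b * (if b == umon i then g i (umon j) else 0)) (umon i)) //.
- by rewrite eqxx.
- by move=> l; rewrite tdeg_umon ffunE; case: eqP.
- by move=> a _ /negbTE ->; rewrite mulr0.
Qed.

End C.

Import GRing.Theory.
Local Open Scope ring_scope.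

Section D.
Variable R : comNzRingType.

Lemma psvar_0 n i : psvar n i (mzero n) = 0 :> R.
Proof.
rewrite /psvar; case: ltnP => //= lt.
case: forallP => // /(_ (Ordinal lt)); by rewrite ffunE /= eqxx.
Qed.

Lemma psvar_u n i (j : 'I_n) : psvar n i (umon j) = (if i == j then 1 else 0) :> R.
Proof.
rewrite /psvar; case: ltnP => /= [lt|ge]; last first.
  by case: eqP => // E; move: (ltn_ord j); rewrite -E ltnNge ge.
case: (i =P j) => [E|ne].
  have -> : [forall j0, umon j j0 == (j0 == i :> nat)].
    by apply/forallP => l; rewrite ffunE E.
  by [].
case: ifP => // /forallP /(_ j); rewrite ffunE eqxx.
by move: ne => /eqP; rewrite eq_sym => /negbTE ->.
Qed.

Lemma ps0_E n m : ps0 n m = 0 :> R.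
Proof. by []. Qed.

Lemma pair2_0 k (a b : ps R k) i : a (mzero k) = 0 -> b (mzero k) = 0 ->
  pair2 a b i (mzero k) = 0.
Proof. by rewrite /pair2; case: eqP. Qed.

Lemma fgl_facts {F : ps R 2} : is_fgl F ->
  [/\ F (mzero 2) = 0, F (umon ord0) = 1 & F (umon (lift ord0 ord0)) = 1].
Proof.
case=> H1 H2 _ _; split.
- by have := congr1 (fun P => P (mzero 1)) H1; rewrite /= comp0E psvar_0.
- have := congr1 (fun P => P (umon ord0)) H1; rewrite /= comp1E; last first.
    by move=> i; apply: pair2_0; rewrite ?psvar_0.
  rewrite !big_ord_recl big_ord0 /pair2 /= psvar_u /= mulr1 /ps0 mulr0.
  by move=> <-; rewrite /ps0 /=; ring.
- have := congr1 (fun P => P (umon ord0)) H2; rewrite /= comp1E; last first.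
    by move=> i; apply: pair2_0; rewrite ?psvar_0.
  rewrite !big_ord_recl big_ord0 /pair2 /= psvar_u /= mulr1 /ps0 mulr0.
  by move=> <-; rewrite /ps0 /=; ring.
Qed.

Lemma fsum_0 (F : ps R 2) n k : is_fgl F -> fsum F n k (mzero n) = 0.
Proof.
move=> /fgl_facts [F0 _ _]; case: k => [|k] //=.
by rewrite comp0E.
Qed.

Lemma fsum_u (F : ps R 2) n k : is_fgl F ->
  fsum F n.+1 k (umon ord0) = if k == 0%N then 0 else 1.
Proof.
move=> fF; have [F0 F1 F2] := fgl_facts fF.
elim: k => [|k IH] //=.
rewrite comp1E; last by move=> i; apply: pair2_0; rewrite ?psvar_0 ?fsum_0.
rewrite !big_ord_recl big_ord0 /pair2 /= IH F1 F2 psvar_u.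
by case: k {IH} => [|k] /=; rewrite ?mulr0 ?mulr1 ?addr0 ?add0r.
Qed.

Lemma s_facts (F : ps R 2) d (s : ps R d.+1) : is_fgl F ->
  pscomp s (fun j : 'I_d.+1 => elemsym d.+1 j.+1) = fsum F d.+1 d.+1 ->
  s (mzero d.+1) = 0 /\ s (umon ord0) = 1.
Proof.
move=> fF H; split.
  have E : pscomp s (fun j : 'I_d.+1 => elemsym d.+1 j.+1) (mzero d.+1) = fsum F d.+1 d.+1 (mzero d.+1) by rewrite H.
  by rewrite comp0E fsum_0 in E.
have E : pscomp s (fun j : 'I_d.+1 => elemsym d.+1 j.+1) (umon ord0) = fsum F d.+1 d.+1 (umon ord0) by rewrite H.
move: E; rewrite comp1E; last first.
  by move=> i; rewrite /elemsym tdeg0 andbF.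
rewrite fsum_u // big_ord_recl big1 ?addr0.
  rewrite /elemsym tdeg_umon /=.
  have -> : [forall i, (umon (@ord0 d) i <= 1)%N] by apply/forallP => i; rewrite ffunE; case: eqP.
  by rewrite mulr1.
by move=> i _; rewrite /elemsym tdeg_umon andbF mulr0.
Qed.

End D.

Import GRing.Theory.
Local Open Scope ring_scope.

Definition mscale {n} k (p : mono n) : mono n := [ffun i => (k * p i)%N].
Definition tailm {d} (m : mono d.+1) : mono d := [ffun i => m (lift ord0 i)].
Definition cons0 {d} (nn : mono d) : mono d.+1 :=
  [ffun j => if unlift ord0 j is Some i then nn i else 0%N].

Section E.
Variable R : comNzRingType.

Definition mon {n} (p : mono n) : ps R n := fun m => if m == p then 1 else 0.

Lemma madd_msub n (m b : mono n) : mle b m -> madd b (msub m b) = m.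
Proof.
move=> /forallP H; apply/ffunP => i; rewrite !ffunE subnKC //.
Qed.

Lemma mle_madd n (p q : mono n) : mle p (madd p q).
Proof. by apply/forallP => i; rewrite ffunE leq_addr. Qed.

Lemma msub_madd n (p q : mono n) : msub (madd p q) p = q.
Proof. by apply/ffunP => i; rewrite !ffunE addKn. Qed.

Lemma mon_mul n (p q : mono n) : psmul (mon p) (mon q) = mon (madd p q).
Proof.
apply: functional_extensionality => m; rewrite psmulE.
case: (boolP (m == madd p q)) => [/eqP E|NE].
  rewrite (@sum_mono_single _ n m (fun b => mle b m) (fun b => mon p b * mon q (msub m b)) p).
  - by rewrite /mon E msub_madd !eqxx mulr1.
  - by rewrite E mle_madd.
  - by rewrite E mle_madd.
  - by move=> a _ /negbTE; rewrite /mon => ->; rewrite mul0r.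
rewrite /mon (negbTE NE) big1 // => a Ha.
case: eqP => [E|]; last by rewrite mul0r.
case: eqP => [E'|]; last by rewrite mulr0.
by move: NE; rewrite -E -E' madd_msub ?eqxx.
Qed.

Lemma ps1_mon n : ps1 n = mon (mzero n) :> ps R n.
Proof. by []. Qed.

Lemma mon_exp n (p : mono n) k : psexp (mon p) k = mon (mscale k p).
Proof.
elim: k => [|k IH].
  rewrite /psexp /= ps1_mon; congr mon; apply/ffunP => i; by rewrite !ffunE.
rewrite /psexp iterS -/(psexp _ k) IH mon_mul; congr mon.
by apply/ffunP => i; rewrite !ffunE mulSn.
Qed.

Lemma psvar_mon n (i : 'I_n) : psvar n i = mon (umon i) :> ps R n.
Proof.
apply: functional_extensionality => m; rewrite /psvar /mon ltn_ord /=.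
congr (if _ then _ else _); apply/forallP/eqP => [H|->].
  by apply/ffunP => j; rewrite ffunE; apply/eqP/H.
by move=> j; rewrite ffunE.
Qed.

Lemma madd0m n : left_id (mzero n) madd.
Proof. by move=> p; apply/ffunP => i; rewrite !ffunE. Qed.

Lemma mon_prod n d (F : 'I_d -> mono n) :
  \big[psmul/ps1 n]_(i < d) mon (F i) = mon (\big[madd/mzero n]_(i < d) F i).
Proof.
by rewrite (big_morph (@mon n) (fun p q => esym (@mon_mul n p q)) (esym (ps1_mon n))).
Qed.

Lemma bigmadd_eval n d (F : 'I_d -> mono n) j :
  (\big[madd/mzero n]_(i < d) F i) j = (\sum_(i < d) F i j)%N.
Proof.
have H1 : {morph (fun p : mono n => p j) : x y / madd x y >-> (x + y)%N}.
  by move=> x y; rewrite /madd ffunE.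
have H2 : (fun p : mono n => p j) (mzero n) = 0%N by rewrite /mzero ffunE.
exact: (big_morph (fun p : mono n => p j) H1 H2).
Qed.

Lemma incl_tailE d (f : ps R d) m :
  incl_tail f m = if m ord0 == 0%N then f (tailm m) else 0.
Proof.
rewrite /incl_tail /pscomp.
have E : forall a : {ffun 'I_d -> 'I_(tdeg m).+1},
   (\big[@psmul R d.+1/ps1 d.+1]_(i < d) psexp (psvar d.+1 (lift ord0 i)) (a i)) m
   = if m == cons0 (bmono a) then 1 else 0.
  move=> a; under eq_bigr => i _ do rewrite psvar_mon mon_exp.
  rewrite mon_prod /mon; congr (if _ == _ then _ else _).
  apply/ffunP => j; rewrite bigmadd_eval ffunE.
  case: unliftP => [i0 ->|->].
    rewrite (bigD1 i0) //= big1 ?addn0; first by rewrite !ffunE eqxx muln1.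
    by move=> i ne; rewrite !ffunE (inj_eq (@lift_inj _ ord0)) eq_sym (negbTE ne) muln0.
  by rewrite big1 // => i _; by rewrite !ffunE (negbTE (neq_lift _ _)) muln0.
under eq_bigr => a _ do rewrite E.
case: (boolP (m ord0 == 0%N)) => [/eqP m0|m0].
  rewrite (@sum_single_N R d _ xpredT (fun b => f b * (if m == cons0 b then 1 else 0)) (tailm m)) //.
  - suff -> : m == cons0 (tailm m) by rewrite mulr1.
    apply/eqP/ffunP => j; rewrite !ffunE; case: unliftP => [i ->|->] //.
    by rewrite ffunE.
  - by move=> i; rewrite ffunE le_tdeg.
  - move=> a _ ne; case: eqP => [E'|]; last by rewrite mulr0.
    case/eqP: ne; apply/ffunP => i; by rewrite [in RHS]ffunE [in RHS]E' !ffunE liftK ?ffunE.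
rewrite big1 // => a _; case: eqP => [E'|]; last by rewrite mulr0.
by move: m0; rewrite [in X in X -> _]E' ffunE unlift_none.
Qed.

Lemma tailm_cons0 d (nn : mono d) : tailm (cons0 nn) = nn.
Proof. by apply/ffunP => i; rewrite !ffunE liftK. Qed.

Lemma cons0_0 d (nn : mono d) : cons0 nn ord0 = 0%N.
Proof. by rewrite ffunE unlift_none. Qed.

Lemma cons0_tailm d (m : mono d.+1) : m ord0 = 0%N -> cons0 (tailm m) = m.
Proof.
move=> m0; apply/ffunP => j; rewrite !ffunE; case: unliftP => [i ->|->] //.
by rewrite ffunE.
Qed.

End E.

Import GRing.Theory.
Local Open Scope ring_scope.

Definition wt {n} (m : mono n) : nat := (\sum_(i < n) i.+1 * m i)%N.

Lemma wt_split {n} {b m : mono n} : mle b m -> wt m = (wt b + wt (msub m b))%N.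
Proof.
move=> /forallP H; rewrite /wt -big_split /=; apply: eq_bigr => i _.
by rewrite ffunE -mulnDr subnKC.
Qed.

Lemma wt_madd n (a b : mono n) : wt (madd a b) = (wt a + wt b)%N.
Proof.
rewrite /wt -big_split /=; apply: eq_bigr => i _.
by rewrite ffunE mulnDr.
Qed.

Lemma wt_umon0 d : wt (umon (@ord0 d)) = 1%N.
Proof.
rewrite /wt big_ord_recl big1 ?ffunE ?eqxx //= => i _.
by rewrite ffunE eq_sym (negbTE (neq_lift _ _)) muln0.
Qed.

Lemma wt_term n (c : mono n) (i : 'I_n) : (i.+1 * c i <= wt c)%N.
Proof. by rewrite /wt (bigD1 i) //= leq_addr. Qed.

Lemma wt_le1 d (c : mono d.+1) : (wt c <= 1)%N -> c = mzero d.+1 \/ c = umon ord0.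
Proof.
move=> H.
have Hi : forall i : 'I_d.+1, i != ord0 -> c i = 0%N.
  move=> i ni; have := leq_trans (wt_term _ c i) H.
  case: i ni => [[|i] Hi] //= _; rewrite mulSn.
  lia.
have H0 : (c ord0 <= 1)%N by have := leq_trans (wt_term _ c ord0) H; rewrite mul1n.
case: (boolP (c ord0 == 0%N)) => [/eqP c0|c0].
  left; apply/ffunP => i; rewrite ffunE; case: (boolP (i == ord0)) => [/eqP ->|]//.
  exact: Hi.
right; apply/ffunP => i; rewrite ffunE; case: (boolP (i == ord0)) => [/eqP ->|ni].
  by move: H0 c0; case: (c ord0) => [|[|]].
by rewrite Hi // (negbTE ni).
Qed.

Lemma msub_msub n (b m : mono n) : mle b m -> msub m (msub m b) = b.
Proof. by move=> /forallP H; apply/ffunP => i; rewrite !ffunE subKn. Qed.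

Lemma mle_msub n (b m : mono n) : mle (msub m b) m.
Proof. by apply/forallP => i; rewrite ffunE leq_subr. Qed.

Section F.
Variable R : comNzRingType.
Variable d : nat.
Variable s : ps R d.+1.
Hypothesis s0 : s (mzero d.+1) = 0.
Hypothesis s1 : s (umon ord0) = 1.

Definition u0 : mono d.+1 := umon ord0.

Definition Tm (g : ps R d.+1) (m : mono d.+1) : R := if (0 < m ord0)%N then g (msub m u0) else 0.

Definition Rest (g : ps R d.+1) (m : mono d.+1) : R :=
  \sum_(a : {ffun 'I_d.+1 -> 'I_(tdeg m).+1} | mle (bmono a) m)
     (if (wt (bmono a) + 2 <= wt m)%N then g (bmono a) * s (msub m (bmono a)) else 0).

Lemma Rest_loc g g' m :
  (forall b, mle b m -> (wt b + 2 <= wt m)%N -> g b = g' b) -> Rest g m = Rest g' m.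
Proof.
move=> H; apply: eq_bigr => a Ha; case: ifP => // Hw.
by rewrite H.
Qed.

Lemma Rest0 m : Rest (ps0 d.+1) m = 0.
Proof. by rewrite /Rest big1 // => a _; rewrite /ps0 mul0r if_same. Qed.

Lemma mle_u0 {m : mono d.+1} : (0 < m ord0)%N -> mle u0 m.
Proof.
move=> H; apply/forallP => i; rewrite ffunE; case: eqP => [->|] //.
Qed.

Lemma split_mul g m : psmul g s m = Tm g m + Rest g m.
Proof.
apply/eqP; rewrite -subr_eq; apply/eqP.
rewrite psmulE /Rest -sumrB.
have key : forall b, mle b m -> ~~ (wt b + 2 <= wt m)%N ->
    s (msub m b) != 0 -> msub m b = u0.
  move=> b Hb Hw Hs; have := wt_split Hb; move: Hw; rewrite -ltnNge => Hw E.
  have : (wt (msub m b) <= 1)%N by move: Hw; rewrite E; lia.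
  by case/wt_le1 => E'; rewrite ?E' ?s0 ?eqxx in Hs.
pose G := fun b => if (wt b + 2 <= wt m)%N then 0 else g b * s (msub m b).
rewrite (eq_bigr (fun a => G (bmono a))); last first.
  by move=> a _; rewrite /G; case: ifP => _; rewrite ?subrr ?subr0.
rewrite /Tm; case: ifP => m0.
  rewrite (@sum_mono_single _ _ m (fun b => mle b m) G (msub m u0)) ?mle_msub //.
  - have Hu := mle_u0 m0.
    rewrite /G msub_msub // s1 mulr1 (wt_split Hu) wt_umon0.
    by rewrite ifN // -ltnNge; lia.
  - move=> a Ha ne; rewrite /G; case: ifP => // Hw.
    case: (eqVneq (s (msub m (bmono a))) 0) => [->|Hs]; first by rewrite mulr0.
    have E := key _ Ha (negbT Hw) Hs.
    by case/eqP: ne; rewrite -E msub_msub.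
rewrite big1 // => a Ha; rewrite /G; case: ifP => // Hw.
case: (eqVneq (s (msub m (bmono a))) 0) => [->|Hs]; first by rewrite mulr0.
have /ffunP /(_ ord0) := key _ Ha (negbT Hw) Hs.
rewrite !ffunE eqxx /=.
by move: m0; case: (m ord0) => //= _; rewrite sub0n.
Qed.

Lemma madd_u0 a : (0 < madd a u0 ord0)%N.
Proof. by rewrite ffunE ffunE eqxx addn1. Qed.

Lemma msub_madd_u0 a : msub (madd a u0) u0 = a.
Proof. by apply/ffunP => i; rewrite !ffunE addnK. Qed.

Lemma madd_msub_u0 (m : mono d.+1) : (0 < m ord0)%N -> madd (msub m u0) u0 = m.
Proof.
move=> H; apply/ffunP => i; rewrite !ffunE; case: eqP => [->|] /=.
  by rewrite subn1 addn1 prednK.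
by rewrite subn0 addn0.
Qed.

Lemma uniq_part (f : ps R d) g : incl_tail f = psmul g s -> f = ps0 d.
Proof.
move=> E.
have G0 : forall N a, (wt a < N)%N -> g a = 0.
  elim=> [|N IH] a Ha //.
  have := congr1 (fun P => P (madd a u0)) E; rewrite /= incl_tailE split_mul /Tm.
  rewrite madd_u0 msub_madd_u0 ffunE ffunE eqxx addn1 /=.
  rewrite (@Rest_loc g (ps0 d.+1)) ?Rest0 ?addr0 => [<- //|b _].
  rewrite wt_madd /u0 wt_umon0 => Hb; apply: IH.
  move: Ha Hb; lia.
have g0 : g = ps0 d.+1.
  by apply: functional_extensionality => a; apply: (G0 (wt a).+1).
apply: functional_extensionality => nn.
have := congr1 (fun P => P (cons0 nn)) E; rewrite /= incl_tailE cons0_0 eqxx tailm_cons0.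
move=> ->; rewrite g0 psmulE big1 // => a _; by rewrite /ps0 mul0r.
Qed.


Fixpoint gs (h : ps R d.+1) (N : nat) : ps R d.+1 :=
  match N with
  | 0 => ps0 d.+1
  | N'.+1 => fun a => h (madd a u0) - Rest (gs h N') (madd a u0)
  end.

Lemma gs_stab h N : forall a, (wt a < N)%N -> gs h N a = gs h N.+1 a.
Proof.
elim: N => [|N IH] a Ha //.
rewrite [LHS]/= [RHS]/=; congr (_ - _); apply: Rest_loc => b _.
rewrite wt_madd /u0 wt_umon0 => Hb; apply: IH; move: Ha Hb; lia.
Qed.

Lemma gs_stab2 h k N a : (wt a < N)%N -> gs h N a = gs h (k + N) a.
Proof.
move=> Ha; elim: k => [|k IH] //; rewrite IH gs_stab //; apply: leq_trans Ha _.
exact: leq_addl.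
Qed.

Definition glim h : ps R d.+1 := fun a => gs h (wt a).+1 a.

Lemma glim_eq h a : glim h a = h (madd a u0) - Rest (glim h) (madd a u0).
Proof.
rewrite /glim [LHS]/=; congr (_ - _); apply: Rest_loc => b _.
rewrite wt_madd /u0 wt_umon0 => Hb.
have -> : wt a = ((wt a - (wt b).+1) + (wt b).+1)%N by move: Hb; lia.
by rewrite -gs_stab2.
Qed.

Lemma exist_part (h : ps R d.+1) :
  exists f : ps R d, in_ideal s (pssub h (incl_tail f)).
Proof.
pose g := glim h.
exists (fun nn => h (cons0 nn) - psmul g s (cons0 nn)); exists g.
apply: functional_extensionality => m; rewrite /pssub incl_tailE.
case: eqP => [m0|m0].
  rewrite cons0_tailm //; ring.
rewrite subr0 split_mul /Tm.
have mp : (0 < m ord0)%N by rewrite lt0n; apply/eqP.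
rewrite mp /g glim_eq madd_msub_u0 //; ring.
Qed.

End F.


Local Close Scope ring_scope.

(* Div^+_{d+1}(G) = spf R[[c_1..c_{d+1}]] (variable j <-> c_{j+1});
   s = (lambda^{d+1})^* x is characterised by s(sigma_1,...,sigma_{d+1}) = x(a_1+...+a_{d+1});
   SDiv has ideal (s); the claim: R[[c_2..c_{d+1}]] -> R[[c]]/(s) is bijective. *)
Theorem proposition13p2 (R : comNzRingType) (F : ps R 2) (d : nat) (s : ps R d.+1) :
  is_fgl F ->
  pscomp s (fun j : 'I_d.+1 => elemsym d.+1 j.+1) = fsum F d.+1 d.+1 ->
  (forall h : ps R d.+1, exists f : ps R d,
      in_ideal s (pssub h (incl_tail f))) /\
  (forall f : ps R d, in_ideal s (incl_tail f) -> f = ps0 d).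
Proof.
move=> fF H; have [s0 s1] := @s_facts R F d s fF H.
split; first by move=> h; exact: (@exist_part R d s s0 s1 h).
by move=> f [g E]; exact: (@uniq_part R d s s0 s1 f g E).
Qed.
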